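(* The class $\mathcal W$ is contained in the class $\mathcal A$; i.e., every bounded directoid with unary operation satisfying (ii), (iii), (iv) and the identity (i') also satisfies condition (i). (Hence $\mathcal W$ is a variety contained in $\mathcal A$.)
   Context: A bounded directoid with unary operation is an algebra $(P,\sqcup,{}',0,1)$ of type $(2,1,0,0)$ satisfying $x\sqcup x=x$, $x\sqcup y=y\sqcup x$, $x\sqcup((x\sqcup y)\sqcup z)=(x\sqcup y)\sqcup z$, $x\sqcup 0=x$, $x\sqcup 1=1$. Its induced order is $x\leq y$ iff $x\sqcup y=y$ (a partial order with least element $0$ and greatest element $1$). Put $x\sqcap y:=(x'\sqcup y')'$. Conditions: (i) for all $x,y,z$: if $(x\sqcup z)\sqcup(((x'\sqcap w)\sqcap((x\sqcup y)\sqcap w))\sqcup z)=z$ for all $w\in P$, then $(x\sqcup y)\sqcup z=z$; (ii) $(x\sqcap y)\sqcup x\approx x$; (iii) $(x\sqcup y)\sqcup(x'\sqcup y)\approx 1$; (iv) $x''\approx x$; (i') $x\sqcup y\leq(x\sqcup z)\sqcup((x'\sqcap(x\sqcup y))\sqcup z)$, i.e. the identity $(x\sqcup y)\sqcup t\approx t$ where $t=(x\sqcup z)\sqcup((x'\sqcap(x\sqcup y))\sqcup z)$. $\mathcal A$ is the class of bounded directoids with unary operation satisfying (i)–(iv) (equivalently, the directoids assigned to generalized orthomodular posets); $\mathcal W$ is the variety of bounded directoids with unary operation satisfying (ii), (iii), (iv) and (i'). *)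

(* Defs.v *)
Record BDirectoidU := {
  carrier :> Type;
  join : carrier -> carrier -> carrier;
  cmp : carrier -> carrier;
  bot : carrier;
  top : carrier;
  join_idem : forall x, join x x = x;
  join_comm : forall x y, join x y = join y x;
  join_dir : forall x y z, join x (join (join x y) z) = join (join x y) z;
  join_bot : forall x, join x bot = x;
  join_top : forall x, join x top = top
}.

Arguments join {b}.
Arguments cmp {b}.
Arguments bot {b}.
Arguments top {b}.

Definition meet {P : BDirectoidU} (x y : P) : P := cmp (join (cmp x) (cmp y)).

Definition cond_i (P : BDirectoidU) : Prop :=
  forall x y z : P,
    (forall w : P,
       join (join x z)
            (join (meet (meet (cmp x) w) (meet (join x y) w)) z) = z) ->
    join (join x y) z = z.

Definition cond_ii (P : BDirectoidU) : Prop :=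
  forall x y : P, join (meet x y) x = x.

Definition cond_iii (P : BDirectoidU) : Prop :=
  forall x y : P, join (join x y) (join (cmp x) y) = top.

Definition cond_iv (P : BDirectoidU) : Prop :=
  forall x : P, cmp (cmp x) = x.

Definition cond_i' (P : BDirectoidU) : Prop :=
  forall x y z : P,
    join (join x y)
         (join (join x z) (join (meet (cmp x) (join x y)) z))
    = join (join x z) (join (meet (cmp x) (join x y)) z).

Definition in_A (P : BDirectoidU) : Prop :=
  cond_i P /\ cond_ii P /\ cond_iii P /\ cond_iv P.

Definition in_W (P : BDirectoidU) : Prop :=
  cond_ii P /\ cond_iii P /\ cond_iv P /\ cond_i' P.

(* Main.v *)
Require Import Defs.

Lemma jabs (P : BDirectoidU) (u v : P) : join (join u v) v = join u v.
Proof.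
  rewrite join_comm.
  pose proof (join_dir P v u (join v u)) as H.
  rewrite !join_idem in H. rewrite (join_comm P u v). exact H.
Qed.

Theorem mainTheorem6 : forall P : BDirectoidU, in_W P -> in_A P.
Proof.
  intros P [Hii [Hiii [Hiv Hi']]].
  split; [|split; [exact Hii | split; assumption]].
  intros x y z H.
  specialize (H (join x y)).
  assert (E : meet (meet (cmp x) (join x y)) (meet (join x y) (join x y))
              = meet (cmp x) (join x y)).
  { unfold meet. rewrite !join_idem, !Hiv. rewrite jabs. reflexivity. }
  rewrite E in H.
  pose proof (Hi' x y z) as K. rewrite H in K. exact K.
Qed.
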